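(* For any tournament $\mathrel{W}$, every $\mathrel{W}$-efficient ranking is $\mathrel{W}$-unimprovable.
   Context: Let $\mathcal{X}$ be a finite set of alternatives. A proto-ranking is an irreflexive and transitive binary relation on $\mathcal{X}$; a ranking is a total proto-ranking; a tournament is a total and asymmetric binary relation on $\mathcal{X}$. The chair has a fixed preference $\succ$, a ranking on $\mathcal{X}$. Interaction: given a tournament $\mathrel{W}$, start from $R_0=\varnothing$; in each period with $R_{t-1}$ not total the chair offers a pair $\{x,y\}$ unranked by $R_{t-1}$, the winner is $x$ if $x\mathrel{W}y$ and $y$ otherwise, and $R_t$ is the transitive closure of $R_{t-1}\cup\{(\text{winner},\text{loser})\}$; stop when $R_t$ is total. A strategy assigns to each non-terminal history (sequence of (winner, loser) pairs) a pair unranked at it; its outcome under $\mathrel{W}$ is the final ranking. A ranking is $\mathrel{W}$-feasible if it is the outcome under $\mathrel{W}$ of some strategy. $R$ is more aligned with $\succ$ than $R'$ if for all $x\succ y$, $xR'y$ implies $xRy$. A ranking is $\mathrel{W}$-unimprovable if no other $\mathrel{W}$-feasible ranking is more aligned with $\succ$ than it. A ranking $R$ is $\mathrel{W}$-efficient if $x\succ y$ and $x\mathrel{W}y$ imply $xRy$. *)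

(* Defs.v *)
From mathcomp Require Import all_boot.
Set Implicit Arguments. Unset Strict Implicit. Unset Printing Implicit Defensive.

Section Defs.
Variable X : finType.

Definition irreflexive_rel (R : rel X) := forall x, ~~ R x x.
Definition total_rel (R : rel X) := forall x y, x != y -> R x y || R y x.
Definition asymmetric_rel (R : rel X) := forall x y, R x y -> ~~ R y x.

Definition proto_ranking (R : rel X) := irreflexive_rel R /\ transitive R.
Definition ranking (R : rel X) := proto_ranking R /\ total_rel R.
Definition tournament (W : rel X) := total_rel W /\ asymmetric_rel W.

(* a history is a sequence of (winner, loser) pairs *)
Definition history := seq (X * X).

(* R_h : transitive closure of the set of (winner, loser) pairs of h
   (starting from R_0 = empty) *)
Definition hist_edges (h : history) : rel X := fun x y => (x, y) \in h.
Definition hist_rel (h : history) : rel X :=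
  fun x y => [exists z, hist_edges h x z && connect (hist_edges h) z y].

Definition unranked (R : rel X) (p : X * X) :=
  [/\ p.1 != p.2, ~~ R p.1 p.2 & ~~ R p.2 p.1].

Definition strategy := history -> X * X.

Definition valid_strategy (sigma : strategy) :=
  forall h : history, ~ total_rel (hist_rel h) -> unranked (hist_rel h) (sigma h).

Definition contest (W : rel X) (p : X * X) : X * X :=
  if W p.1 p.2 then (p.1, p.2) else (p.2, p.1).

Definition step (W : rel X) (sigma : strategy) (h : history) : history :=
  if [forall x, forall y, (x != y) ==> (hist_rel h x y || hist_rel h y x)]
  then h else rcons h (contest W (sigma h)).

(* each period ranks a new ordered pair, so the interaction stops after at
   most #|X| * #|X| periods; after that the history is constant *)
Definition play (W : rel X) (sigma : strategy) : history :=
  iter (#|X| * #|X|) (step W sigma) [::].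

Definition outcome (W : rel X) (sigma : strategy) : rel X :=
  hist_rel (play W sigma).

Definition feasible (W : rel X) (R : rel X) :=
  exists sigma, valid_strategy sigma /\ R =2 outcome W sigma.

Definition more_aligned (pref : rel X) (R R' : rel X) :=
  forall x y, pref x y -> R' x y -> R x y.

Definition unimprovable (pref W : rel X) (R : rel X) :=
  ~ exists R' : rel X, [/\ feasible W R', ~ (R' =2 R) & more_aligned pref R' R].

Definition efficient (pref W : rel X) (R : rel X) :=
  forall x y, pref x y -> W x y -> R x y.

End Defs.

(* Main.v *)
Require Import Defs.
From mathcomp Require Import all_boot.
Set Implicit Arguments. Unset Strict Implicit. Unset Printing Implicit Defensive.

Section Aux.
Variable X : finType.
Implicit Types (h : history X) (x y z a b : X).

Lemma path_closure (e R : rel X) :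
  (forall u v, e u v -> R u v) -> transitive R ->
  forall x y, connect e x y -> x = y \/ R x y.
Proof.
move=> eR tR x y /connectP [p].
elim: p x => [|z p IH] x /=; first by move=> _ ->; left.
move=> /andP[exz pz] Ey; right.
have := IH z pz Ey; case=> [<-|Rz]; first exact: eR.
exact: tR (eR _ _ exz) Rz.
Qed.

Lemma connect_hist h u v : connect (hist_edges h) u v -> u = v \/ hist_rel h u v.
Proof.
move/connectP=> [[|z p]] /=; first by move=> _ ->; left.
move=> /andP[ez pz] ->; right; apply/existsP; exists z; rewrite ez /=.
by apply/connectP; exists p.
Qed.

Lemma hist_connect h u v : hist_rel h u v -> connect (hist_edges h) u v.
Proof.
move/existsP=> [z /andP[ez c]]; exact: connect_trans (connect1 ez) c.
Qed.

Lemma hist_trans h : transitive (hist_rel h).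
Proof.
move=> y x z /existsP[w /andP[exw cwy]] hyz; apply/existsP; exists w.
by rewrite exw (connect_trans cwy (hist_connect hyz)).
Qed.

Lemma edge_hist h u v : hist_edges h u v -> hist_rel h u v.
Proof. by move=> e; apply/existsP; exists v; rewrite e connect0. Qed.

Lemma edges_rcons h a b u v :
  hist_edges (rcons h (a, b)) u v = hist_edges h u v || ((u, v) == (a, b)).
Proof. by rewrite /hist_edges mem_rcons in_cons orbC. Qed.

Lemma connect_rcons h a b x y : connect (hist_edges (rcons h (a, b))) x y ->
  connect (hist_edges h) x y \/
  (connect (hist_edges h) x a /\ connect (hist_edges h) b y).
Proof.
move/connectP=> [p].
elim: p x => [|z p IH] x /=; first by move=> _ ->; left; exact: connect0.
move=> /andP[exz pz] Ey; have := IH z pz Ey.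
rewrite edges_rcons in exz; case/orP: exz => [exz|/eqP[-> ->]].
  by case=> [c|[c1 c2]]; [left|right]; rewrite ?(connect_trans (connect1 exz)).
by case=> [c|[c1 c2]]; right; split; rewrite ?connect0.
Qed.

Lemma hist_rcons h a b x y : hist_rel (rcons h (a, b)) x y ->
  hist_rel h x y \/ ((x = a \/ hist_rel h x a) /\ (b = y \/ hist_rel h b y)).
Proof.
move/existsP=> [z /andP[exz czy]]; have := connect_rcons czy.
rewrite edges_rcons in exz; case/orP: exz => [exz|/eqP[-> ->]].
  case=> [c|[c1 c2]]; first by left; apply/existsP; exists z; rewrite exz.
  right; split; last exact: connect_hist.
  by right; apply/existsP; exists z; rewrite exz.
by case=> [c|[c1 c2]]; right; split; (try by left); exact: connect_hist.
Qed.

Lemma hist_sub h p x y : hist_rel h x y -> hist_rel (rcons h p) x y.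
Proof.
move/existsP=> [z /andP[exz czy]]; apply/existsP; exists z.
have sub : forall u v, hist_edges h u v -> hist_edges (rcons h p) u v.
  by move=> u v; rewrite /hist_edges mem_rcons in_cons => ->; rewrite orbT.
rewrite sub //=; apply: connect_sub czy => u v /sub; exact: connect1.
Qed.

Lemma hist_new h a b : hist_rel (rcons h (a, b)) a b.
Proof. by apply: edge_hist; rewrite edges_rcons eqxx orbT. Qed.

End Aux.

Section Play.
Variables (X : finType) (W : rel X) (sigma : strategy X).
Hypothesis tW : tournament W.
Hypothesis vs : valid_strategy sigma.

Definition tb (h : history X) :=
  [forall x, forall y, (x != y) ==> (hist_rel h x y || hist_rel h y x)].

Lemma tbP h : reflect (total_rel (hist_rel h)) (tb h).
Proof.
apply: (iffP idP).
  by move=> /forallP H x y nxy; move: (H x) => /forallP /(_ y) /implyP; apply.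
by move=> H; apply/forallP=> x; apply/forallP=> y; apply/implyP; apply: H.
Qed.

Definition Sset (h : history X) := [set p : X * X | hist_rel h p.1 p.2].

Definition Inv k (h : history X) :=
  [/\ forall p, p \in h -> W p.1 p.2, irreflexive_rel (hist_rel h)
    & tb h \/ k <= #|Sset h|].

Lemma Inv_iter k : Inv k (iter k (step W sigma) [::]).
Proof.
elim: k => [|k [IW Iirr Ic]] /=.
  split; [by move=> p | | by right].
  by move=> x; apply/existsP=> [[z]].
set h := iter k _ _; rewrite /step.
have -> : [forall x, forall y, (x != y) ==> (hist_rel h x y || hist_rel h y x)] = tb h by [].
case: ifP => Ht; first by split=> //; left.
have ntot : ~ total_rel (hist_rel h) by move/tbP; rewrite Ht.
have [n12 nr12 nr21] := vs ntot.
case E : (sigma h) => [a0 b0]; rewrite E /= in n12 nr12 nr21.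
have [a [b [Ec Wab nab nba]]] : exists a b, [/\ contest W (sigma h) = (a, b), W a b,
    ~~ hist_rel h a b & ~~ hist_rel h b a].
  rewrite /contest E /=; case: ifP => Wab.
    by exists a0, b0.
  exists b0, a0; split=> //.
  by case/orP: (tW.1 _ _ n12) => //; rewrite Wab.
rewrite -E Ec; split.
- move=> p; rewrite mem_rcons in_cons => /orP[/eqP -> //|]; exact: IW.
- move=> x; apply/negP=> /hist_rcons.
  case=> [|[[->|hxa] [ebx|hbx]]]; first by apply/negP.
  + by move: Wab; rewrite ebx => Waa; move: (tW.2 _ _ Waa); rewrite Waa.
  + by rewrite hbx in nba.
  + by move: hxa; rewrite -ebx (negbTE nba).
  + by rewrite (hist_trans hbx hxa) in nba.
- right; case: Ic => [|Ic]; first by rewrite Ht.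
  apply: leq_ltn_trans Ic _; apply: proper_card; apply/properP; split.
    by apply/subsetP=> p; rewrite !inE; apply: hist_sub.
  by exists (a, b); rewrite !inE /= ?hist_new ?(negbTE nab).
Qed.

Lemma play_props : [/\ forall p, p \in play W sigma -> W p.1 p.2,
   irreflexive_rel (outcome W sigma) & total_rel (outcome W sigma)].
Proof.
rewrite /outcome /play; have [IW Iirr Ic] := Inv_iter (#|X| * #|X|).
split=> //; case: Ic => [/tbP //|Ic].
set h := iter _ _ _ in IW Iirr Ic *.
case Ht: (tb h); first exact/tbP.
move/negbT: Ht => /forallPn [x _].
have : #|Sset h| < #|X| * #|X|.
  rewrite -card_prod -cardsT; apply: proper_card; apply/properP; split.
    exact: subsetT.
  by exists (x, x); rewrite !inE //= (negbTE (Iirr x)).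
by rewrite ltnNge Ic.
Qed.

End Play.

Theorem lemma1 (X : finType) (pref W R : rel X) :
  ranking pref -> tournament W -> ranking R -> efficient pref W R ->
  unimprovable pref W R.
Proof.
move=> [[_ _] totp] tW [[irrR trR] totR] eff [R' [[sigma [vs ER]] neq al]].
have [IW Iirr Itot] := play_props tW vs.
set h := play W sigma in IW.
have irrR' : irreflexive_rel R' by move=> x; rewrite ER; exact: Iirr.
have trR' : transitive R' by move=> y x z; rewrite !ER; exact: hist_trans.
have edgeR : forall u v, hist_edges h u v -> R u v.
  move=> u v huv; have Wuv := IW _ huv.
  have nuv : u != v by apply/eqP=> E; subst v; move: (tW.2 _ _ Wuv); rewrite Wuv.
  case/orP: (totp _ _ nuv) => [puv|pvu]; first exact: eff.
  case/orP: (totR _ _ nuv) => // Rvu.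
  have R'vu := al _ _ pvu Rvu.
  have R'uv : R' u v by rewrite ER; exact: edge_hist.
  by move: (irrR' u); rewrite (trR' _ _ _ R'uv R'vu).
apply: neq => x y; apply/idP/idP.
  rewrite ER => /existsP[z /andP[exz czy]].
  have Rxz := edgeR _ _ exz.
  by case: (path_closure edgeR trR czy) => [<- //|Rzy]; exact: trR Rxz Rzy.
move=> Rxy.
have nxy : x != y by apply/eqP=> E; subst y; move: (irrR x); rewrite Rxy.
have : total_rel R' by move=> u v; rewrite !ER; exact: Itot.
move=> /(_ _ _ nxy) /orP[//|R'yx].
have Ryx : R y x.
  move: R'yx; rewrite ER => /existsP[z /andP[exz czy]].
  have Rxz := edgeR _ _ exz.
  by case: (path_closure edgeR trR czy) => [<- //|Rzy]; exact: trR Rxz Rzy.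
by move: (irrR x); rewrite (trR _ _ _ Rxy Ryx).
Qed.
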